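(* Let $v_1\ge v_2>0$, $m\in\mathbb{Z}_{\ge1}$ and $0<b\le m$. Let $(X,Y)$ be a strategy profile with $\mathbf{E}(X)=m$ and $\mathbf{E}(Y)=b$ such that: $m=v_2/2$; $(X,Y)$ is a Nash equilibrium of the General Lotto game $\Gamma(m,b)$; $X=U_{\mathrm{O}}^m$; and $Y=\left(1-\frac bm\right)\delta_0+\frac bm Z$ where (a) if $m=1$: $Z=\lambda_{\mathrm{O}}U_{\mathrm{O}}^1+\lambda_{\mathrm{E}}U_{\mathrm{E}}^1$ with $\lambda_{\mathrm{O}},\lambda_{\mathrm{E}}\ge0$, $\lambda_{\mathrm{O}}+\lambda_{\mathrm{E}}=1$, $\frac{\lambda_{\mathrm{E}}}{2}\ge1-\frac{2}{bv_1}$ and $\frac{\lambda_{\mathrm{E}}}{2}\le\frac1b-\frac{2}{bv_1}$; (b) if $m\ge2$: $Z=\lambda_{\mathrm{O}}U_{\mathrm{O}}^m+\lambda_{\mathrm{E}}U_{\mathrm{E}}^m+\lambda_{\mathrm{O}\uparrow1}U_{\mathrm{O}\uparrow1}^m+\sum_{j=1}^{m-1}\lambda_jW_j^m$ with $\lambda_{\mathrm{O}},\lambda_{\mathrm{E}},\lambda_{\mathrm{O}\uparrow1},\lambda_1,\dots,\lambda_{m-1}\ge0$, $\lambda_{\mathrm{O}}+\lambda_{\mathrm{E}}+\lambda_{\mathrm{O}\uparrow1}+\sum_{j=1}^{m-1}\lambda_j=1$, $\frac{\lambda_{\mathrm{E}}}{m+1}+\frac{1}{2m}\sum_{j=1}^{m-1}\lambda_j\le\frac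 mb\left(1-\frac{v_2}{v_1}\right)$, $\frac{\lambda_{\mathrm{O}}}{m}+\frac{\lambda_{\mathrm{E}}}{m+1}+\frac{\lambda_{\mathrm{O}\uparrow1}}{m-1}+\frac{1}{m}\sum_{j=1}^{m-1}\lambda_j=\frac{2m}{bv_1}$, and, in the case $b>m-1$, $\frac{1}{2m}\sum_{j=1}^{m-1}\lambda_j+\frac{\lambda_{\mathrm{O}\uparrow1}}{m-1}\le\frac{m-b}{b}$. Then $(X,Y)$ is a Nash equilibrium of the discrete all-pay auction with valuations $v_1,v_2$.
   Context: Discrete all-pay auction: two players, 1 and 2, value a prize at $v_1$ and $v_2$ respectively, where $v_1\ge v_2>0$. A (mixed) strategy is a probability distribution on $\mathbb{Z}_{\ge 0}$ with finite mean, identified with a $\mathbb{Z}_{\ge0}$-valued random variable; the two players' choices are independent. If player 1 uses $X$ and player 2 uses $Y$, the expected payoffs are $P^1(X,Y)=v_1\Pr(X>Y)+\frac{v_1}{2}\Pr(X=Y)-\mathbf{E}(X)$ and $P^2(Y,X)=v_2\Pr(Y>X)+\frac{v_2}{2}\Pr(X=Y)-\mathbf{E}(Y)$. A Nash equilibrium of the all-pay auction is a pair $(X,Y)$ with $P^1(X,Y)\ge P^1(X',Y)$ and $P^2(Y,X)\ge P^2(Y',X)$ for all strategies $X',Y'$. $\delta_j$ denotes the point mass at $j$; $\lambda A+(1-\lambda)B$ denotes the mixture of distributions $A$ and $B$ (similarly for longer convex combinations). Discrete General Lotto game: for reals $a,b\ge 0$, in $\Gamma(a,b)$ player 1 chooses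 a distribution $X$ on $\mathbb{Z}_{\ge0}$ with $\mathbf{E}(X)=a$ and player 2 chooses a distribution $Y$ on $\mathbb{Z}_{\ge 0}$ with $\mathbf{E}(Y)=b$ (independently); the payoff to player 1 is $H(X,Y)=\Pr(X>Y)-\Pr(X<Y)$ and to player 2 is $H(Y,X)=-H(X,Y)$. A Nash equilibrium of $\Gamma(a,b)$ is a pair $(X,Y)$ from these strategy sets such that neither player can increase her payoff by switching to another strategy in her own strategy set. Special distributions: for $m\ge1$, $U_{\mathrm{O}}^m$ is the uniform distribution on $\{1,3,\dots,2m-1\}$; for $m\ge0$, $U_{\mathrm{E}}^m$ is the uniform distribution on $\{0,2,\dots,2m\}$; for $m\ge2$, $U_{\mathrm{O}\uparrow1}^m$ is the uniform distribution on $\{2,4,\dots,2m-2\}$; for $m\ge2$ and $1\le j\le m-1$, $W_j^m=\frac{1}{2m}\delta_0+\sum_{i=1}^{j-1}\frac1m\delta_{2i}+\frac{1}{2m}\delta_{2j}+\sum_{i=j+1}^{m}\frac1m\delta_{2i-1}$. *)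

(* Defs.v *)
From Stdlib Require Import Reals Lra Lia Arith List.
From Coquelicot Require Import Coquelicot.
Open Scope R_scope.

Definition is_strategy (p : nat -> R) : Prop :=
  (forall n, 0 <= p n) /\ is_series p 1 /\ ex_series (fun n => INR n * p n).

Definition mean (p : nat -> R) : R := Series (fun n => INR n * p n).

(* Pr(X > Y) for independent X ~ p, Y ~ q:  sum_i p(i) * Pr(Y < i). *)
Definition partial_mass (q : nat -> R) (i : nat) : R :=
  fold_right Rplus 0 (map q (seq 0 i)).
Definition prob_gt (p q : nat -> R) : R := Series (fun i => p i * partial_mass q i).
Definition prob_eq (p q : nat -> R) : R := Series (fun i => p i * q i).

Definition payoff1 (v1 : R) (p q : nat -> R) : R :=
  v1 * prob_gt p q + v1 / 2 * prob_eq p q - mean p.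
Definition payoff2 (v2 : R) (q p : nat -> R) : R :=
  v2 * prob_gt q p + v2 / 2 * prob_eq p q - mean q.

Definition allpay_NE (v1 v2 : R) (p q : nat -> R) : Prop :=
  is_strategy p /\ is_strategy q /\
  (forall p', is_strategy p' -> payoff1 v1 p' q <= payoff1 v1 p q) /\
  (forall q', is_strategy q' -> payoff2 v2 q' p <= payoff2 v2 q p).

Definition lotto_H (p q : nat -> R) : R := prob_gt p q - prob_gt q p.

Definition lotto_NE (a b : R) (p q : nat -> R) : Prop :=
  is_strategy p /\ mean p = a /\ is_strategy q /\ mean q = b /\
  (forall p', is_strategy p' -> mean p' = a -> lotto_H p' q <= lotto_H p q) /\
  (forall q', is_strategy q' -> mean q' = b -> lotto_H q' p <= lotto_H q p).

Definition delta (j : nat) (n : nat) : R := if Nat.eqb n j then 1 else 0.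

Definition sum_range (a k : nat) (f : nat -> R) : R :=
  fold_right Rplus 0 (map f (seq a k)).

Definition U_O (m : nat) (n : nat) : R :=
  sum_range 1 m (fun i => / INR m * delta (2 * i - 1) n).
Definition U_E (m : nat) (n : nat) : R :=
  sum_range 0 (m + 1) (fun i => / INR (m + 1) * delta (2 * i) n).
Definition U_Oup1 (m : nat) (n : nat) : R :=
  sum_range 1 (m - 1) (fun i => / INR (m - 1) * delta (2 * i) n).
Definition W (m j : nat) (n : nat) : R :=
  / (2 * INR m) * delta 0 n
  + sum_range 1 (j - 1) (fun i => / INR m * delta (2 * i) n)
  + / (2 * INR m) * delta (2 * j) n
  + sum_range (j + 1) (m - j) (fun i => / INR m * delta (2 * i - 1) n).

(* Main.v *)
Require Import Defs.
From Stdlib Require Import Reals List Lra Lia Arith.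
From Coquelicot Require Import Coquelicot.
Open Scope R_scope.


Lemma Series_zero : Series (fun _ => 0) = 0.
Proof. rewrite (Series_ext _ (fun n => 0 * (fun _ => 0) n)) by (intro; ring). rewrite Series_scal_l. ring. Qed.

Lemma Series_nonneg a : (forall n, 0 <= a n) -> ex_series a -> 0 <= Series a.
Proof. intros H E. rewrite <- Series_zero. apply Series_le; auto. intro n; split; [lra|auto]. Qed.

Lemma pm_S q i : partial_mass q (S i) = partial_mass q i + q i.
Proof. unfold partial_mass. rewrite seq_S, map_app, fold_right_app. simpl.
  generalize (map q (seq 0 i)). intro l. induction l; simpl; [ring|]. rewrite IHl. ring. Qed.

Lemma pm_sum q i : partial_mass q (S i) = sum_n q i.
Proof. induction i. rewrite sum_O. unfold partial_mass; simpl; ring.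
  rewrite pm_S, IHi, sum_Sn. reflexivity. Qed.

Lemma pm_bounds q : is_strategy q -> forall i, 0 <= partial_mass q i <= 1.
Proof. intros [Hp [Hs _]] i. destruct i. unfold partial_mass; simpl; lra.
  split. induction i. rewrite pm_S. unfold partial_mass; simpl. specialize (Hp 0%nat); lra.
  rewrite pm_S. specialize (Hp (S i)); lra.
  rewrite pm_sum.
  assert (H: is_series (fun k => q (S i + k)%nat) (1 - sum_n q i)).
  { apply is_series_incr_n. lia. simpl. unfold plus; simpl. match goal with |- is_series _ ?x => replace x with (1:R) end. exact Hs. change (@sum_n (NormedModule.AbelianMonoid R_AbsRing R_NormedModule) q i) with (@sum_n R_AbelianMonoid q i); ring. }
  assert (0 <= Series (fun k => q (S i + k)%nat)).
  { apply Series_nonneg. intro; apply Hp. eexists; exact H. }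
  apply is_series_unique in H.
  lra.
Qed.

Lemma q_le1 q : is_strategy q -> forall i, 0 <= q i <= 1.
Proof. intros H i. pose proof (pm_bounds q H (S i)). pose proof (pm_bounds q H i).
  rewrite pm_S in H0. destruct H as [Hp _]. specialize (Hp i). lra. Qed.

Definition gfun (v : R) (q : nat -> R) (i : nat) : R :=
  v * (partial_mass q i + q i / 2) - INR i.

Lemma ex_prod p c : is_strategy p -> (forall i, 0 <= c i <= 1) -> ex_series (fun i => p i * c i).
Proof. intros Hs Hc. destruct Hs as [Hp [Hs _]]. apply (@ex_series_le R_AbsRing R_CompleteNormedModule _ p).
  intro n. change (norm (p n * c n)) with (Rabs (p n * c n)).
  specialize (Hp n); specialize (Hc n). rewrite Rabs_pos_eq by nra. nra.
  eexists; exact Hs. Qed.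

Lemma is_series_g v p q : is_strategy p -> is_strategy q ->
  is_series (fun i => p i * gfun v q i)
    (v * prob_gt p q + v / 2 * prob_eq p q - mean p).
Proof. intros Hp Hq.
  assert (E1 := ex_prod p (partial_mass q) Hp (pm_bounds q Hq)).
  assert (E2 := ex_prod p q Hp (q_le1 q Hq)).
  destruct Hp as [_ [_ E3]].
  apply Series_correct in E1; apply Series_correct in E2; apply Series_correct in E3.
  apply (is_series_scal_l v) in E1. apply (is_series_scal_l (v/2)) in E2.
  pose proof (is_series_minus _ _ _ _ (is_series_plus _ _ _ _ E1 E2) E3) as E.
  eapply is_series_ext; [|exact E]. intro n. unfold gfun, plus, opp, scal; simpl.
  unfold mult; simpl. unfold Rdiv, Rminus. ring.
Qed.

Lemma is_series_R a b (l l' : R) : is_series a l -> (forall n, a n = b n) -> l = l' -> is_series b l'.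
Proof. intros H E ->. eapply is_series_ext; eauto. Qed.

Lemma pay1_le v p q V : is_strategy p -> is_strategy q -> (forall i, gfun v q i <= V) ->
  payoff1 v p q <= V.
Proof. intros Hp Hq HV. pose proof (is_series_g v p q Hp Hq) as E.
  destruct Hp as [Hpp [Hs E3]].
  pose proof (is_series_minus _ _ _ _ (is_series_scal_l V _ _ Hs) E) as E'.
  assert (E2 : is_series (fun n => V * p n - p n * gfun v q n) (V - payoff1 v p q)).
  { eapply is_series_R. exact E'. intro n. unfold plus, opp, scal; simpl; unfold mult; simpl. unfold Rminus; ring.
    unfold payoff1, plus, opp, scal; simpl; unfold mult; simpl. unfold Rminus; ring. }
  assert (0 <= Series (fun n => V * p n - p n * gfun v q n)).
  { apply Series_nonneg. intro n.
    specialize (HV n); specialize (Hpp n); nra. eexists; exact E2. }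
  apply is_series_unique in E2. lra.
Qed.

Lemma pay1_eqV v p q V : is_strategy p -> is_strategy q -> (forall i, p i <> 0 -> gfun v q i = V) ->
  payoff1 v p q = V.
Proof. intros Hp Hq HV. pose proof (is_series_g v p q Hp Hq) as E.
  destruct Hp as [Hpp [Hs E3]].
  apply (is_series_scal_r V) in Hs. rewrite Rmult_1_l in Hs.
  apply is_series_unique in E. apply is_series_unique in Hs.
  unfold payoff1. rewrite <- E, <- Hs. apply Series_ext. intro n.
  destruct (Req_dec (p n) 0) as [h|h]. rewrite h; ring. rewrite HV; auto.
Qed.

Lemma pay2_g v q p : payoff2 v q p = v * prob_gt q p + v / 2 * prob_eq q p - mean q.
Proof. unfold payoff2, prob_eq. f_equal. f_equal. f_equal. apply Series_ext; intro; ring. Qed.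

Lemma gfun_S v q i : gfun v q (S i) = gfun v q i + v * (q i + q (S i)) / 2 - 1.
Proof. unfold gfun. rewrite pm_S, S_INR. unfold Rdiv; field. Qed.

Lemma gfun_0 v q : gfun v q 0 = v * q 0%nat / 2.
Proof. unfold gfun, partial_mass. simpl. unfold Rdiv. ring. Qed.

Lemma NE_from v1 v2 X Y V1 :
 is_strategy X -> is_strategy Y ->
 (forall i, gfun v1 Y i <= V1) -> (forall i, X i <> 0 -> gfun v1 Y i = V1) ->
 (forall j, gfun v2 X j <= 0) -> (forall j, Y j <> 0 -> gfun v2 X j = 0) ->
 allpay_NE v1 v2 X Y.
Proof. intros HX HY H1 H2 H3 H4. unfold allpay_NE. repeat split; auto; try apply HX; try apply HY.
  intros p' Hp'. rewrite (pay1_eqV v1 X Y V1); auto. apply pay1_le; auto.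
  intros q' Hq'. rewrite !pay2_g. change (payoff1 v2 q' X <= payoff1 v2 Y X).
  rewrite (pay1_eqV v2 Y X 0); auto. apply pay1_le; auto.
Qed.

Lemma p1_bound (v1 : R) (m : nat) (Y : nat -> R) :
  v1 > 0 -> (1 <= m)%nat -> (forall n, 0 <= Y n) -> (forall n, (n > 2*m)%nat -> Y n = 0) ->
  Y 0%nat + Y 1%nat >= 2/v1 ->
  (forall k, (1 <= k <= m)%nat -> Y (2*k-1)%nat + Y (2*k)%nat <= 2/v1) ->
  (forall k, (1 <= k <= m-1)%nat -> Y (2*k-1)%nat + 2 * Y (2*k)%nat + Y (2*k+1)%nat = 4/v1) ->
  (forall i, gfun v1 Y i <= gfun v1 Y 1) /\
  (forall k, (1 <= k <= m)%nat -> gfun v1 Y (2*k-1) = gfun v1 Y 1).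
Proof. intros Hv Hm Hn Hz H0 H2 H3.
  assert (Hs2 : forall k, (1 <= k <= m)%nat -> gfun v1 Y (2*k) <= gfun v1 Y (2*k-1)).
  { intros k Hk. replace (2*k)%nat with (S (2*k-1)) by lia. rewrite gfun_S.
    replace (S (2*k-1)) with (2*k)%nat by lia. specialize (H2 k Hk).
    assert (v1 * (Y (2 * k - 1)%nat + Y (2 * k)%nat) <= 2).
    { apply Rmult_le_compat_l with (r := v1) in H2; [|lra]. unfold Rdiv in H2.
      rewrite <- Rmult_assoc, (Rmult_comm v1 2), Rmult_assoc, Rinv_r in H2; lra. }
    lra. }
  assert (Hodd : forall k, (1 <= k <= m)%nat -> gfun v1 Y (2*k-1) = gfun v1 Y 1).
  { induction k; intros Hk. lia. destruct (Nat.eq_dec k 0). subst; reflexivity.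
    rewrite <- IHk by lia.
    replace (2 * S k - 1)%nat with (S (S (2*k-1))) by lia. rewrite !gfun_S.
    replace (S (S (2*k-1))) with (2*k+1)%nat by lia. replace (S (2*k-1)) with (2*k)%nat by lia.
    specialize (H3 k ltac:(lia)).
    assert (v1 * (Y (2 * k - 1)%nat + 2 * Y (2 * k)%nat + Y (2 * k + 1)%nat) = 4).
    { rewrite H3. field. lra. }
    lra. }
  split; auto.
  assert (Hbig : forall d, gfun v1 Y (2*m + d) <= gfun v1 Y 1).
  { induction d. rewrite Nat.add_0_r. rewrite <- (Hodd m) by lia. apply Hs2; lia.
    replace (2*m + S d)%nat with (S (2*m+d)) by lia. rewrite gfun_S.
    rewrite (Hz (S (2*m+d))) by lia.
    assert (v1 * Y (2*m+d)%nat <= 2).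
    { destruct d. rewrite Nat.add_0_r. specialize (H2 m ltac:(lia)). pose proof (Hn (2*m-1)%nat).
      assert (Y (2*m)%nat <= 2/v1) by lra.
      apply Rmult_le_compat_l with (r := v1) in H1; [|lra]. unfold Rdiv in H1.
      rewrite <- Rmult_assoc, (Rmult_comm v1 2), Rmult_assoc, Rinv_r in H1; lra.
      rewrite Hz by lia. lra. }
    lra. }
  intro i. destruct (Nat.Even_or_Odd i) as [[q Hq]|[q Hq]]; subst i.
  - destruct q. simpl. rewrite gfun_0. replace 1%nat with (S 0) by reflexivity. rewrite gfun_S, gfun_0.
    simpl in H0.
    assert (v1 * (Y 0%nat + Y 1%nat) >= 2).
    { apply Rmult_ge_compat_l with (r := v1) in H0; [|lra]. unfold Rdiv in H0.
      rewrite <- Rmult_assoc, (Rmult_comm v1 2), Rmult_assoc, Rinv_r in H0; lra. }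
    lra.
    destruct (le_lt_dec (S q) m).
    + rewrite <- (Hodd (S q)) by lia. apply Hs2; lia.
    + replace (2 * S q)%nat with (2*m + (2*(S q) - 2*m))%nat by lia. apply Hbig.
  - destruct (le_lt_dec (S q) m).
    + replace (2*q+1)%nat with (2 * S q - 1)%nat by lia. rewrite Hodd by lia. lra.
    + replace (2*q+1)%nat with (2*m + (2*q+1 - 2*m))%nat by lia. apply Hbig.
Qed.

Lemma sr_S a k f : sum_range a (S k) f = f a + sum_range (S a) k f.
Proof. reflexivity. Qed.
Lemma sr_0 a f : sum_range a 0 f = 0.
Proof. reflexivity. Qed.

Lemma sr_ext a k f g : (forall i, (a <= i < a + k)%nat -> f i = g i) -> sum_range a k f = sum_range a k g.
Proof. revert a; induction k; intros a H. reflexivity. rewrite !sr_S. rewrite H by lia. rewrite IHk; auto.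
  intros; apply H; lia. Qed.

Lemma sr_plus a k f g : sum_range a k (fun i => f i + g i) = sum_range a k f + sum_range a k g.
Proof. revert a; induction k; intros a. rewrite !sr_0; ring. rewrite !sr_S, IHk. ring. Qed.

Lemma sr_scal a k c f : sum_range a k (fun i => c * f i) = c * sum_range a k f.
Proof. revert a; induction k; intros a. rewrite !sr_0; ring. rewrite !sr_S, IHk. ring. Qed.

Lemma sr_le a k f g : (forall i, (a <= i < a + k)%nat -> f i <= g i) -> sum_range a k f <= sum_range a k g.
Proof. revert a; induction k; intros a H. rewrite !sr_0; lra. rewrite !sr_S.
  assert (f a <= g a) by (apply H; lia). assert (sum_range (S a) k f <= sum_range (S a) k g) by (apply IHk; intros; apply H; lia). lra. Qed.

Lemma sr_nonneg a k f : (forall i, (a <= i < a + k)%nat -> 0 <= f i) -> 0 <= sum_range a k f.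
Proof. intro H. replace 0 with (sum_range a k (fun _ => 0)). apply sr_le; auto.
  clear H; revert a; induction k; intros; auto. rewrite sr_S, IHk; ring. Qed.

Lemma delta_neq j n : n <> j -> delta j n = 0.
Proof. intro h. unfold delta. destruct (Nat.eqb_spec n j); [lia|auto]. Qed.
Lemma delta_eq j n : n = j -> delta j n = 1.
Proof. intro h. unfold delta. destruct (Nat.eqb_spec n j); [auto|lia]. Qed.

Lemma sr_zero a k c f n : (forall i, (a <= i < a + k)%nat -> f i <> n) ->
  sum_range a k (fun i => c * delta (f i) n) = 0.
Proof. revert a; induction k; intros a H. reflexivity. rewrite sr_S, IHk.
  rewrite delta_neq. ring. intro e; apply (H a); lia. intros; apply H; lia. Qed.

Lemma sr_one a k c f n : (exists i0, (a <= i0 < a + k)%nat /\ f i0 = n) ->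
  (forall i i', (a <= i < a + k)%nat -> (a <= i' < a + k)%nat -> f i = n -> f i' = n -> i = i') ->
  sum_range a k (fun i => c * delta (f i) n) = c.
Proof. revert a; induction k; intros a [i0 [Hi Hf]] U. lia. rewrite sr_S.
  destruct (Nat.eq_dec i0 a).
  - subst. rewrite delta_eq by auto. rewrite sr_zero. ring.
    intros i Hi' e. specialize (U i a ltac:(lia) ltac:(lia) e eq_refl). lia.
  - rewrite delta_neq. rewrite IHk. ring. exists i0; split; auto; lia.
    intros; apply U; auto; lia. intro e. specialize (U i0 a ltac:(lia) ltac:(lia) Hf (eq_sym e)). lia.
Qed.

Ltac evd :=
  repeat match goal with
  | |- context [delta ?j ?n] =>
      first [ rewrite (delta_neq j n) by lia | rewrite (delta_eq j n) by lia ]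
  end.

Ltac evs :=
  repeat match goal with
  | |- context [sum_range ?a ?k (fun i => ?c * delta (@?f i) ?n)] =>
      first [ rewrite (sr_zero a k c f n) by (intros; simpl; lia)
            | rewrite (sr_one a k c f n);
                [ | match n with
                    | (2 * ?kk - 1)%nat => exists kk; simpl; lia
                    | (2 * ?kk)%nat => exists kk; simpl; lia
                    | (2 * ?kk + 1)%nat => exists (kk + 1)%nat; simpl; lia
                    end
                  | intros; simpl in *; lia ] ]
  end.

Section M.
Variable m : nat.

Lemma UO_odd k : (1 <= k <= m)%nat -> U_O m (2*k-1) = / INR m.
Proof. intro. unfold U_O. evs. reflexivity. Qed.

Lemma UO_zero n : (forall k, (1 <= k <= m)%nat -> n <> (2*k-1)%nat) -> U_O m n = 0.
Proof. intro H. unfold U_O. rewrite sr_zero. auto. intros i Hi e; apply (H i); lia. Qed.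

Lemma UE_even k : (k <= m)%nat -> U_E m (2*k) = / INR (m+1).
Proof. intro. unfold U_E. evs. reflexivity. Qed.

Lemma UE_zero n : (forall k, (k <= m)%nat -> n <> (2*k)%nat) -> U_E m n = 0.
Proof. intro H. unfold U_E. rewrite sr_zero. auto. intros i Hi e; apply (H i); lia. Qed.

Lemma UU_even k : (1 <= k <= m - 1)%nat -> U_Oup1 m (2*k) = / INR (m-1).
Proof. intro. unfold U_Oup1. evs. reflexivity. Qed.

Lemma UU_zero n : (forall k, (1 <= k <= m - 1)%nat -> n <> (2*k)%nat) -> U_Oup1 m n = 0.
Proof. intro H. unfold U_Oup1. rewrite sr_zero. auto. intros i Hi e; apply (H i); lia. Qed.

End M.

Section W.
Variables m j : nat.
Hypothesis Hj : (1 <= j <= m - 1)%nat.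

Lemma inv2 : / (2 * INR m) = / INR m / 2.
Proof. rewrite Rinv_mult. unfold Rdiv. ring. Qed.

Lemma W0 : W m j 0 = / INR m / 2.
Proof. unfold W. evd. evs. rewrite inv2. lra. Qed.

Lemma W1 : W m j 1 = 0.
Proof. unfold W. evd. replace 1%nat with (2*1-1)%nat by reflexivity. evs. lra. Qed.

Lemma Wbig n : (n > 2*m)%nat -> W m j n = 0.
Proof. intro. unfold W. evd. evs. lra. Qed.

Lemma Wpair k : (1 <= k <= m)%nat -> W m j (2*k-1) + W m j (2*k) <= / INR m.
Proof. intro Hk. assert (0 <= / INR m). { apply Rlt_le, Rinv_0_lt_compat, lt_0_INR; lia. }
  unfold W. destruct (lt_eq_lt_dec k j) as [[h|h]|h].
  - evd. evs. rewrite inv2. lra.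
  - subst. evd. evs. rewrite inv2. lra.
  - evd. evs. rewrite inv2. lra.
Qed.

Lemma Wtrip k : (1 <= k <= m - 1)%nat -> W m j (2*k-1) + 2 * W m j (2*k) + W m j (2*k+1) = 2 / INR m.
Proof. intro Hk. unfold W. destruct (lt_eq_lt_dec k j) as [[h|h]|h].
  - evd. evs. rewrite inv2. lra.
  - subst. evd. evs. rewrite inv2. lra.
  - evd. evs. rewrite inv2. lra.
Qed.
End W.

Definition wsum m (l : nat -> R) n := sum_range 1 (m - 1) (fun j => l j * W m j n).
Definition Lsum m (l : nat -> R) := sum_range 1 (m - 1) l.

Section WS.
Variables (m : nat) (l : nat -> R).
Hypothesis Hl : forall j, (1 <= j <= m - 1)%nat -> 0 <= l j.

Lemma w_big n : (n > 2*m)%nat -> wsum m l n = 0.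
Proof. intro. unfold wsum. rewrite (sr_ext _ _ _ (fun j => 0 * l j)). rewrite sr_scal; ring.
  intros j Hj. rewrite Wbig; auto. ring. all: lia. Qed.

Lemma w01 : wsum m l 0 + wsum m l 1 = / INR m / 2 * Lsum m l.
Proof. unfold wsum, Lsum. rewrite <- sr_plus, <- sr_scal. apply sr_ext. intros j Hj.
  rewrite W0, W1 by lia. ring. Qed.

Lemma w_pair k : (1 <= k <= m)%nat -> wsum m l (2*k-1) + wsum m l (2*k) <= / INR m * Lsum m l.
Proof. intro. unfold wsum, Lsum. rewrite <- sr_plus, <- sr_scal. apply sr_le. intros j Hj.
  pose proof (Wpair m j ltac:(lia) k H). specialize (Hl j ltac:(lia)). nra. Qed.

Lemma w_trip k : (1 <= k <= m - 1)%nat ->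
  wsum m l (2*k-1) + 2 * wsum m l (2*k) + wsum m l (2*k+1) = 2 / INR m * Lsum m l.
Proof. intro. unfold wsum, Lsum. rewrite <- !sr_scal, <- !sr_plus. apply sr_ext. intros j Hj.
  pose proof (Wtrip m j ltac:(lia) k H). rewrite <- H0 at 1 . ring. Qed.
End WS.

Lemma frac_le p q r s : 0 < q -> 0 < s -> p * s <= r * q -> p / q <= r / s.
Proof. intros hq hs h. replace (p/q) with ((p*s) * / (q*s)) by (field; lra).
  replace (r/s) with ((r*q) * / (q*s)) by (field; lra).
  apply Rmult_le_compat_r; auto. apply Rlt_le, Rinv_0_lt_compat; nra. Qed.

Lemma arith_main x b v1 lO lE lU L : x >= 2 -> 0 < b <= x -> v1 > 0 -> 0 <= lO -> 0 <= lE -> 0 <= lU -> 0 <= L ->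
  lO + lE + lU + L = 1 ->
  lO / x + lE / (x + 1) + lU / (x - 1) + 1 / x * L = 2 * x / (b * v1) ->
  (b > x - 1 -> 1 / (2 * x) * L + lU / (x - 1) <= (x - b) / b) ->
  ((1 - b / x) + b / x * (lO * / x + lE * / (x + 1) + / x / 2 * L) >= 2 / v1)
  /\ (forall u w, 0 <= u <= / (x - 1) -> w <= / x * L ->
        b / x * (lO * / x + lE * / (x + 1) + lU * u + w) <= 2 / v1)
  /\ b / x * (lO * (2 * / x) + lE * (2 * / (x + 1)) + lU * (2 * / (x - 1)) + 2 / x * L) = 4 / v1.
Proof. intros Hx Hb Hv HO HE HU HL Hs Heq Hc.
  set (A := lO / x) in *. set (B := lE / (x + 1)) in *. set (C := lU / (x - 1)) in *. set (D := 1 / x * L) in *.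
  assert (E2 : 2 / v1 = b / x * (A + B + C + D)). { rewrite Heq. field. lra. }
  assert (Bx : 0 < b / x). { unfold Rdiv; apply Rmult_lt_0_compat; [lra|apply Rinv_0_lt_compat; lra]. }
  split; [|split].
  - assert (K : C + D / 2 <= (x - b) / b).
    { destruct (Rlt_le_dec (x - 1) b) as [h|h].
      + replace (D / 2) with (1 / (2 * x) * L) by (unfold D; field; lra). lra.
      + assert (C + D / 2 <= (lU + L) / (x - 1)).
        { unfold C, D. replace ((lU + L) / (x - 1)) with (lU / (x - 1) + L / (x - 1)) by (field; lra).
          assert (1 / x * L / 2 <= L / (x - 1)).
          { replace (1 / x * L / 2) with (L / (2 * x)) by (field; lra). apply frac_le; nra. }
          lra. }
        assert ((lU + L) / (x - 1) <= (x - b) / b). { apply frac_le; nra. }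
        lra. }
    replace (lO * / x) with A by (unfold A; field; lra).
    replace (lE * / (x + 1)) with B by (unfold B; field; lra).
    replace (/ x / 2 * L) with (D / 2) by (unfold D; field; lra).
    rewrite E2.
    assert (1 - b / x = b / x * ((x - b) / b)) by (field; lra).
    rewrite H. nra.
  - intros u w [hu1 hu2] hw.
    replace (lO * / x) with A by (unfold A; field; lra).
    replace (lE * / (x + 1)) with B by (unfold B; field; lra).
    rewrite E2. apply Rmult_le_compat_l. lra.
    assert (lU * u <= C). { unfold C. unfold Rdiv. apply Rmult_le_compat_l; lra. }
    assert (w <= D). { unfold D. lra. }
    lra.
  - replace (4 / v1) with (2 * (2 / v1)) by (field; lra). rewrite E2.
    unfold A, B, C, D. field. lra.
Qed.

Definition Yf m b lO lE lU l n := (1 - b / INR m) * delta 0 n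
  + b / INR m * (lO * U_O m n + lE * U_E m n + lU * U_Oup1 m n + wsum m l n).

Lemma Y2_props m b v1 lO lE lU l : (2 <= m)%nat -> 0 < b <= INR m -> v1 > 0 ->
  0 <= lO -> 0 <= lE -> 0 <= lU -> (forall j, (1 <= j <= m - 1)%nat -> 0 <= l j) ->
  lO + lE + lU + sum_range 1 (m - 1) l = 1 ->
  lO / INR m + lE / (INR m + 1) + lU / (INR m - 1) + 1 / INR m * sum_range 1 (m - 1) l = 2 * INR m / (b * v1) ->
  (b > INR m - 1 -> 1 / (2 * INR m) * sum_range 1 (m - 1) l + lU / (INR m - 1) <= (INR m - b) / b) ->
  let Y := Yf m b lO lE lU l in
  (forall n, (n > 2*m)%nat -> Y n = 0) /\
  Y 0%nat + Y 1%nat >= 2/v1 /\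
  (forall k, (1 <= k <= m)%nat -> Y (2*k-1)%nat + Y (2*k)%nat <= 2/v1) /\
  (forall k, (1 <= k <= m-1)%nat -> Y (2*k-1)%nat + 2 * Y (2*k)%nat + Y (2*k+1)%nat = 4/v1).
Proof. intros Hm Hb Hv HO HE HU Hl Hs Heq Hc Y.
  assert (Hx : INR m >= 2). { replace 2 with (INR 2) by (simpl; ring). apply Rle_ge, le_INR; lia. }
  assert (Ep : INR (m + 1) = INR m + 1) by (rewrite plus_INR; simpl; ring).
  assert (Em : INR (m - 1) = INR m - 1) by (rewrite minus_INR by lia; simpl; ring).
  destruct (arith_main (INR m) b v1 lO lE lU (Lsum m l) Hx Hb Hv HO HE HU) as [P01 [Ppair Ptrip]].
  { apply sr_nonneg. intros; apply Hl; lia. }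
  exact Hs. exact Heq. exact Hc.
  assert (Hinv1 : 0 < / (INR m - 1)). { apply Rinv_0_lt_compat; lra. }
  split; [|split; [|split]].
  - intros n Hn. unfold Y, Yf. rewrite w_big by auto. rewrite UO_zero, UE_zero, UU_zero; try (intros; lia).
    evd. ring.
  - unfold Y, Yf. evd.
    rewrite (UO_zero m 0) by (intros; lia). replace (U_O m 1) with (/ INR m) by (symmetry; apply (UO_odd m 1); lia).
    replace (U_E m 0) with (/ INR (m+1)) by (symmetry; apply (UE_even m 0); lia). rewrite (UE_zero m 1) by (intros; lia).
    rewrite (UU_zero m 0) by (intros; lia). rewrite (UU_zero m 1) by (intros; lia).
    pose proof (w01 m l) as W01. rewrite Ep.
    eapply Rge_trans; [|exact P01]. right.
    rewrite <- W01. ring.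
  - intros k Hk. unfold Y, Yf. evd.
    rewrite (UO_odd m k) by lia. rewrite (UO_zero m (2*k)) by (intros; lia).
    rewrite (UE_even m k) by lia. rewrite (UE_zero m (2*k-1)) by (intros; lia).
    rewrite (UU_zero m (2*k-1)) by (intros; lia).
    pose proof (w_pair m l Hl k Hk) as WP.
    assert (exists u, U_Oup1 m (2*k) = u /\ 0 <= u <= / (INR m - 1)) as [u [Hu1 Hu2]].
    { destruct (Nat.eq_dec k m).
      - exists 0. split. apply UU_zero. intros; lia. lra.
      - exists (/ (INR m - 1)). split. rewrite UU_even by lia. rewrite Em; auto. lra. }
    rewrite Hu1, Ep.
    apply Rle_trans with (b / INR m * (lO * / INR m + lE * / (INR m + 1) + lU * u + (wsum m l (2 * k - 1) + wsum m l (2 * k)))).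
    right; ring. apply Ppair; auto.
  - intros k Hk. unfold Y, Yf. evd.
    rewrite (UO_odd m k) by lia. rewrite (UO_zero m (2*k)) by (intros; lia).
    replace (U_O m (2*k+1)) with (/ INR m) by (symmetry; replace (2*k+1)%nat with (2*(k+1)-1)%nat by lia; apply UO_odd; lia).
    rewrite (UE_even m k) by lia. rewrite (UE_zero m (2*k-1)) by (intros; lia).
    rewrite (UE_zero m (2*k+1)) by (intros; lia).
    rewrite (UU_zero m (2*k-1)) by (intros; lia). rewrite (UU_zero m (2*k+1)) by (intros; lia).
    rewrite (UU_even m k) by lia.
    pose proof (w_trip m l k Hk) as WT.
    rewrite <- Ptrip. rewrite Ep, Em. unfold Lsum in *. rewrite <- WT. ring.
Qed.

Lemma UO_pair m j : (1 <= m)%nat -> (j < 2*m)%nat -> U_O m j + U_O m (S j) = / INR m.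
Proof. intros Hm Hj. destruct (Nat.Even_or_Odd j) as [[q Hq]|[q Hq]]; subst j.
  - rewrite (UO_zero m (2*q)) by (intros; lia).
    replace (U_O m (S (2*q))) with (/ INR m) by (symmetry; replace (S (2*q)) with (2*(q+1)-1)%nat by lia; apply UO_odd; lia). ring.
  - rewrite (UO_zero m (S (2*q+1))) by (intros; lia).
    replace (U_O m (2*q+1)) with (/ INR m) by (symmetry; replace (2*q+1)%nat with (2*(q+1)-1)%nat by lia; apply UO_odd; lia). ring.
Qed.

Lemma p2 m v2 : (1 <= m)%nat -> INR m = v2 / 2 ->
  (forall j, (j <= 2*m)%nat -> gfun v2 (U_O m) j = 0) /\ (forall j, gfun v2 (U_O m) j <= 0).
Proof. intros Hm Hv.
  assert (Hx : INR m > 0) by (apply lt_0_INR; lia).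
  assert (A1 : forall j, (j <= 2*m)%nat -> gfun v2 (U_O m) j = 0).
  { induction j; intro Hj. rewrite gfun_0. rewrite (UO_zero m 0) by (intros; lia). lra.
    rewrite gfun_S, IHj by lia. rewrite UO_pair by lia.
    replace v2 with (2 * INR m) by lra. field. lra. }
  split; auto.
  assert (A2 : forall d, gfun v2 (U_O m) (2*m + d) <= 0).
  { induction d. rewrite Nat.add_0_r. rewrite A1 by lia. lra.
    replace (2*m + S d)%nat with (S (2*m+d)) by lia. rewrite gfun_S.
    rewrite (UO_zero m (2*m+d)) by (intros; lia). rewrite (UO_zero m (S (2*m+d))) by (intros; lia). lra. }
  intro j. destruct (le_lt_dec j (2*m)). rewrite A1; auto; lra.
  replace j with (2*m + (j - 2*m))%nat by lia. apply A2.
Qed.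

Lemma finish v1 v2 m Y : v1 > 0 -> (1 <= m)%nat -> INR m = v2 / 2 -> is_strategy (U_O m) -> is_strategy Y ->
  (forall n, (n > 2*m)%nat -> Y n = 0) ->
  Y 0%nat + Y 1%nat >= 2/v1 ->
  (forall k, (1 <= k <= m)%nat -> Y (2*k-1)%nat + Y (2*k)%nat <= 2/v1) ->
  (forall k, (1 <= k <= m-1)%nat -> Y (2*k-1)%nat + 2 * Y (2*k)%nat + Y (2*k+1)%nat = 4/v1) ->
  allpay_NE v1 v2 (U_O m) Y.
Proof. intros Hv Hm Hm2 HX HY Hz H0 H2 H3.
  assert (Hn : forall n, 0 <= Y n) by apply HY.
  destruct (p1_bound v1 m Y Hv Hm Hn Hz H0 H2 H3) as [P1 P2].
  destruct (p2 m v2 Hm Hm2) as [Q1 Q2].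
  apply (NE_from v1 v2 (U_O m) Y (gfun v1 Y 1)); auto.
  - intros i Hi. destruct (Nat.Even_or_Odd i) as [[q Hq]|[q Hq]]; subst i.
    + exfalso. apply Hi. apply UO_zero. intros; lia.
    + destruct (le_lt_dec (S q) m).
      * replace (2*q+1)%nat with (2 * S q - 1)%nat by lia. apply P2; lia.
      * exfalso. apply Hi. apply UO_zero. intros; lia.
  - intros j Hj. apply Q1. destruct (le_lt_dec j (2*m)); auto. exfalso; apply Hj, Hz; lia.
Qed.

Theorem lemma3 (v1 v2 : R) (m : nat) (b : R) (X Y : nat -> R) :
  v1 >= v2 -> v2 > 0 -> (1 <= m)%nat -> 0 < b <= INR m ->
  is_strategy X -> is_strategy Y -> mean X = INR m -> mean Y = b ->
  INR m = v2 / 2 ->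
  lotto_NE (INR m) b X Y ->
  X = U_O m ->
  (m = 1%nat ->
     exists lO lE : R,
       0 <= lO /\ 0 <= lE /\ lO + lE = 1 /\
       lE / 2 >= 1 - 2 / (b * v1) /\
       lE / 2 <= 1 / b - 2 / (b * v1) /\
       Y = (fun n => (1 - b / INR m) * delta 0 n
                     + b / INR m * (lO * U_O 1 n + lE * U_E 1 n))) ->
  ((2 <= m)%nat ->
     exists (lO lE lU : R) (l : nat -> R),
       0 <= lO /\ 0 <= lE /\ 0 <= lU /\
       (forall j, (1 <= j <= m - 1)%nat -> 0 <= l j) /\
       lO + lE + lU + sum_range 1 (m - 1) l = 1 /\
       lE / (INR m + 1) + 1 / (2 * INR m) * sum_range 1 (m - 1) l
         <= INR m / b * (1 - v2 / v1) /\
       lO / INR m + lE / (INR m + 1) + lU / (INR m - 1)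
         + 1 / INR m * sum_range 1 (m - 1) l = 2 * INR m / (b * v1) /\
       (b > INR m - 1 ->
          1 / (2 * INR m) * sum_range 1 (m - 1) l + lU / (INR m - 1)
            <= (INR m - b) / b) /\
       Y = (fun n => (1 - b / INR m) * delta 0 n
                     + b / INR m * (lO * U_O m n + lE * U_E m n + lU * U_Oup1 m n
                                    + sum_range 1 (m - 1) (fun j => l j * W m j n)))) ->
  allpay_NE v1 v2 X Y.
Proof.
  intros Hv12 Hv2 Hm Hb HX HY _ _ Hm2 _ HXe H1 H2. subst X.
  assert (Hv : v1 > 0) by lra.
  destruct (Nat.eq_dec m 1) as [->|Hm1].
  - destruct (H1 eq_refl) as [lO [lE [HO [HE [Hs [Ha [Hb2 HYe]]]]]]].
    subst Y. simpl INR in *.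
    assert (A1 : b * (1 - 2 / (b * v1)) = b - 2 / v1) by (field; lra).
    assert (A2 : b * (1 / b - 2 / (b * v1)) = 1 - 2 / v1) by (field; lra).
    assert (B1 : b * (lE / 2) >= b * (1 - 2 / (b * v1))) by (apply Rmult_ge_compat_l; lra).
    assert (B2 : b * (lE / 2) <= b * (1 / b - 2 / (b * v1))) by (apply Rmult_le_compat_l; lra).
    apply (finish v1 v2 1); auto; simpl INR; try lra.
    + intros n Hn. rewrite UO_zero, UE_zero by (intros; lia). evd. ring.
    + evd. rewrite (UO_zero 1 0) by (intros; lia). rewrite (UE_zero 1 1) by (intros; lia).
      replace (U_O 1 1) with (/ INR 1) by (symmetry; apply (UO_odd 1 1); lia).
      replace (U_E 1 0) with (/ INR (1+1)) by (symmetry; apply (UE_even 1 0); lia).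
      simpl INR. replace (/ (1+1)) with (1/2) by field. replace (/1) with 1 by field.
      replace lO with (1 - lE) by lra. lra.
    + intros k Hk. assert (k = 1%nat) by lia. subst k. simpl. evd.
      rewrite (UO_zero 1 2) by (intros; lia). rewrite (UE_zero 1 1) by (intros; lia).
      replace (U_O 1 1) with (/ INR 1) by (symmetry; apply (UO_odd 1 1); lia).
      replace (U_E 1 2) with (/ INR (1+1)) by (symmetry; apply (UE_even 1 1); lia).
      simpl INR. replace (/ (1+1)) with (1/2) by field. replace (/1) with 1 by field.
      replace lO with (1 - lE) by lra. lra.
    + intros k Hk. lia.
  - destruct (H2 ltac:(lia)) as [lO [lE [lU [l [HO [HE [HU [Hl [Hs [_ [Heq [Hc HYe]]]]]]]]]]]].
    destruct (Y2_props m b v1 lO lE lU l ltac:(lia) Hb Hv HO HE HU Hl Hs Heq Hc) as [Z1 [Z2 [Z3 Z4]]].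
    assert (Y = Yf m b lO lE lU l) as ->. { rewrite HYe. reflexivity. }
    apply finish; auto.
Qed.
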